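(* Let $\alpha\in\mathbb{N}_0$. (i) For every $y\in C^{(2\alpha+4)}(0,\infty)$ and $x>0$, $$(-1)^{\alpha+1}\prod_{j=0}^{\alpha+1}\Big\{L_{2,x}^{2j-1}-\frac{2j}{x}-j\Big\}y(x)=(-1)^{\alpha+1}L_{2,x}^{-1}\prod_{j=1}^{\alpha+1}\big\{L_{2,x}^{\alpha+1}-j\big\}y(x).$$ (ii) Denoting by $\mathcal{L}$ the operator on the right-hand side of (i), for every $n\in\mathbb{N}$ one has $\big[\mathcal{L}+(n)_{\alpha+2}\big]T_n^{\alpha}(x)=0$.
   Context: For real $\gamma$ (including $-1$), $L_{2,x}^{\gamma}=xD_x^2+(\gamma+1-x)D_x$, so $L_{2,x}^{-1}=x[D_x^2-D_x]$. The product $\prod_{j=a}^{b}\{A_j\}$ means $A_b\cdots A_a$, factors applied successively to the function on the right in increasing order of $j$. $(a)_k$ is the Pochhammer symbol. $L_n^{\gamma}(x)=\frac{(\gamma+1)_n}{n!}{}_1F_1(-n;\gamma+1;x)$ are the Laguerre polynomials, and for $n\ge1$, $T_n^{\alpha}(x)=-t_n^{\alpha}\,x\,L_{n-1}^{\alpha+2}(x)$ with $t_n^{\alpha}=(\alpha+2)_{n-1}/n!$. *)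

(* Defs.v *)
From Stdlib Require Import Arith Reals Lra Lia ClassicalEpsilon.
Open Scope R_scope.

Definition op := (R -> R) -> (R -> R).

(* The derivative of f at x: the (unique) l with derivable_pt_lim f x l,
   and 0 if f is not differentiable at x. *)
Definition Dx (f : R -> R) (x : R) : R :=
  match excluded_middle_informative (exists l, derivable_pt_lim f x l) with
  | left H => proj1_sig (constructive_indefinite_description _ H)
  | right _ => 0
  end.

Fixpoint Dn (k : nat) (f : R -> R) : R -> R :=
  match k with O => f | S k' => Dx (Dn k' f) end.

Definition Ck_pos (k : nat) (f : R -> R) : Prop :=
  (forall j, (j < k)%nat -> forall x, 0 < x -> exists l, derivable_pt_lim (Dn j f) x l)
  /\ (forall x, 0 < x -> continuity_pt (Dn k f) x).

Definition L2 (gamma : R) : op :=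
  fun f x => x * Dn 2 f x + (gamma + 1 - x) * Dx f x.

(* compop A a k = A_(a+k-1) o ... o A_a  (A_a applied first);
   so prod_{j=a}^{b} {A_j} = compop A a (b - a + 1). *)
Fixpoint compop (A : nat -> op) (a k : nat) : op :=
  match k with
  | O => fun f => f
  | S k' => fun f => A (a + k')%nat (compop A a k' f)
  end.

Fixpoint poch (a : R) (k : nat) : R :=
  match k with O => 1 | S k' => poch a k' * (a + INR k') end.

Definition F11_term (n : nat) (b x : R) : R :=
  sum_f_R0 (fun k => poch (- INR n) k / poch b k * x ^ k / INR (fact k)) n.

Definition laguerre (n : nat) (gamma x : R) : R :=
  poch (gamma + 1) n / INR (fact n) * F11_term n (gamma + 1) x.

Definition tcoef (n alpha : nat) : R := poch (INR alpha + 2) (n - 1) / INR (fact n).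
Definition Tpoly (n alpha : nat) (x : R) : R :=
  - tcoef n alpha * x * laguerre (n - 1) (INR alpha + 2) x.

Definition Afac (j : nat) : op :=
  fun f x => L2 (2 * INR j - 1) f x - (2 * INR j / x) * f x - INR j * f x.

Definition Bfac (alpha : nat) (j : nat) : op :=
  fun f x => L2 (INR alpha + 1) f x - INR j * f x.

Definition LHSop (alpha : nat) : op := compop Afac 0 (alpha + 2).

Definition RHSop (alpha : nat) : op :=
  fun f => L2 (-1) (compop (Bfac alpha) 1 (alpha + 1) f).

Definition calL (alpha : nat) : op :=
  fun f x => (-1) ^ (alpha + 1) * RHSop alpha f x.

(* Main.v *)
Require Import Defs.
From Stdlib Require Import Reals.
From Stdlib Require Import Lra Lia FunctionalExtensionality ClassicalEpsilon.
From Coquelicot Require Import Coquelicot.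
Import Defs.
Open Scope R_scope.

Definition eqp (f g : R -> R) := forall x, 0 < x -> f x = g x.
Definition dpos (f : R -> R) := forall x, 0 < x -> exists l, derivable_pt_lim f x l.
Definition sm (k : nat) (f : R -> R) := forall j, (j < k)%nat -> dpos (Dn j f).

Lemma Dx_eq f x l : derivable_pt_lim f x l -> Dx f x = l.
Proof.
  intro H. unfold Dx. destruct excluded_middle_informative as [e|n].
  - destruct constructive_indefinite_description as [l' H']. simpl.
    eapply uniqueness_limite; eauto.
  - exfalso. apply n. eauto.
Qed.

Lemma dl_Dx g x : (exists l, derivable_pt_lim g x l) -> derivable_pt_lim (fun t => g t) x (Dx g x).
Proof.
  intros [l H]. rewrite (Dx_eq _ _ _ H). exact H.
Qed.

Lemma dlim_local f g x l : eqp f g -> 0 < x -> derivable_pt_lim f x l -> derivable_pt_lim g x l.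
Proof.
  intros E Hx H eps Heps. destruct (H eps Heps) as [d Hd].
  assert (Hm : 0 < Rmin d x) by (apply Rmin_pos; [apply cond_pos| lra]).
  exists (mkposreal _ Hm). intros h Hh Hhd. simpl in Hhd.
  rewrite <- (E x Hx), <- (E (x+h)).
  - apply Hd; auto. apply Rlt_le_trans with (1:=Hhd). apply Rmin_l.
  - assert (Rabs h < x) by (apply Rlt_le_trans with (1:=Hhd); apply Rmin_r).
    apply Rabs_def2 in H0. lra.
Qed.

Lemma Dx_local f g : eqp f g -> eqp (Dx f) (Dx g).
Proof.
  intros E x Hx. unfold Dx.
  destruct (excluded_middle_informative (exists l, derivable_pt_lim f x l)) as [[l Hl]|n1];
  destruct (excluded_middle_informative (exists l, derivable_pt_lim g x l)) as [[l' Hl']|n2].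
  - destruct constructive_indefinite_description as [a Ha].
    destruct constructive_indefinite_description as [b Hb]. simpl.
    eapply uniqueness_limite; [apply (dlim_local f g x a E Hx Ha)| exact Hb].
  - exfalso; apply n2. exists l. eapply dlim_local; eauto.
  - exfalso; apply n1. exists l'. eapply dlim_local; eauto. intros z Hz; symmetry; auto.
  - reflexivity.
Qed.

Lemma Dn_local k f g : eqp f g -> eqp (Dn k f) (Dn k g).
Proof. induction k; simpl; intros E; auto. apply Dx_local; auto. Qed.

Lemma Dn_S' k f : Dn (S k) f = Dn k (Dx f).
Proof. induction k; simpl; auto. simpl in IHk. rewrite IHk. auto. Qed.

Lemma dpos_local f g : eqp f g -> dpos f -> dpos g.
Proof. intros E H x Hx. destruct (H x Hx) as [l Hl]. exists l. eapply dlim_local; eauto. Qed.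

Lemma sm_local k f g : eqp f g -> sm k f -> sm k g.
Proof. intros E H j Hj. eapply dpos_local; [apply Dn_local; exact E| auto]. Qed.

Lemma sm_S k f : sm (S k) f <-> dpos f /\ sm k (Dx f).
Proof.
  split.
  - intros H. split. apply (H 0%nat); lia. intros j Hj. rewrite <- Dn_S'. apply H. lia.
  - intros [H1 H2] j Hj. destruct j. exact H1. rewrite Dn_S'. apply H2. lia.
Qed.

Lemma sm_mono k j f : sm k f -> (j <= k)%nat -> sm j f.
Proof. intros H Hj i Hi. apply H. lia. Qed.

Lemma dl_plus f g x a b : derivable_pt_lim f x a -> derivable_pt_lim g x b ->
  derivable_pt_lim (fun t => f t + g t) x (a + b).
Proof. intros; apply derivable_pt_lim_plus; auto. Qed.
Lemma dl_minus f g x a b : derivable_pt_lim f x a -> derivable_pt_lim g x b ->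
  derivable_pt_lim (fun t => f t - g t) x (a - b).
Proof. intros; apply derivable_pt_lim_minus; auto. Qed.
Lemma dl_mult f g x a b : derivable_pt_lim f x a -> derivable_pt_lim g x b ->
  derivable_pt_lim (fun t => f t * g t) x (a * g x + f x * b).
Proof. intros; apply derivable_pt_lim_mult; auto. Qed.
Lemma dl_id x : derivable_pt_lim (fun t => t) x 1.
Proof. apply derivable_pt_lim_id. Qed.
Lemma dl_const c x : derivable_pt_lim (fun _ => c) x 0.
Proof. apply derivable_pt_lim_const. Qed.
Lemma dl_pow n x : derivable_pt_lim (fun t => t ^ n) x (INR n * x ^ Init.Nat.pred n).
Proof. apply derivable_pt_lim_pow. Qed.

Lemma dl_opp f x a : derivable_pt_lim f x a -> derivable_pt_lim (fun t => - f t) x (- a).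
Proof. intros; apply derivable_pt_lim_opp; auto. Qed.

Ltac dl := repeat first [ apply dl_minus | apply dl_plus | apply dl_opp | apply dl_mult | apply dl_id
   | apply dl_const | apply dl_pow | apply dl_Dx ].

Inductive ispoly : (R -> R) -> Prop :=
| ip_c c : ispoly (fun _ => c)
| ip_id : ispoly (fun t => t)
| ip_add f g : ispoly f -> ispoly g -> ispoly (fun t => f t + g t)
| ip_mul f g : ispoly f -> ispoly g -> ispoly (fun t => f t * g t)
| ip_ext f g : ispoly f -> (forall t, f t = g t) -> ispoly g.

Lemma ispoly_der a : ispoly a -> exists a', ispoly a' /\ forall t, derivable_pt_lim a t (a' t).
Proof.
  induction 1.
  - exists (fun _ => 0). split. constructor. intros; apply dl_const.
  - exists (fun _ => 1). split. constructor. intros; apply dl_id.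
  - destruct IHispoly1 as [f' [P1 H1]]. destruct IHispoly2 as [g' [P2 H2]].
    exists (fun t => f' t + g' t). split. constructor; auto. intros; apply dl_plus; auto.
  - destruct IHispoly1 as [f' [P1 H1]]. destruct IHispoly2 as [g' [P2 H2]].
    exists (fun t => f' t * g t + f t * g' t). split.
    + constructor; constructor; auto.
    + intros; apply dl_mult; auto.
  - destruct IHispoly as [f' [P1 H1]]. exists f'. split; auto.
    replace g with f; auto. apply functional_extensionality; auto.
Qed.

Lemma ispoly_pow k : ispoly (fun t => t ^ k).
Proof. induction k. exact (ip_c 1). simpl. apply ip_mul; auto. apply ip_id. Qed.

Lemma D_add f g : dpos f -> dpos g -> eqp (Dx (fun t => f t + g t)) (fun t => Dx f t + Dx g t).
Proof.
  intros Hf Hg x Hx. apply Dx_eq. apply dl_plus; apply dl_Dx; auto.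
Qed.

Lemma dpos_add f g : dpos f -> dpos g -> dpos (fun t => f t + g t).
Proof. intros Hf Hg x Hx. eexists. apply dl_plus; apply dl_Dx; auto. Qed.

Lemma dpos_mul a a' f : (forall t, derivable_pt_lim a t (a' t)) -> dpos f -> dpos (fun t => a t * f t).
Proof. intros Ha Hf x Hx. eexists. apply dl_mult. apply Ha. apply dl_Dx; auto. Qed.

Lemma sm_add k : forall f g, sm k f -> sm k g -> sm k (fun t => f t + g t).
Proof.
  induction k; intros f g Hf Hg. intros j Hj; lia.
  apply sm_S in Hf as [Hf1 Hf2]. apply sm_S in Hg as [Hg1 Hg2].
  apply sm_S. split. apply dpos_add; auto.
  eapply sm_local. intros x Hx; symmetry; apply D_add; auto. apply IHk; auto.
Qed.

Lemma sm_mulp k : forall a f, ispoly a -> sm k f -> sm k (fun t => a t * f t).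
Proof.
  induction k; intros a f Ha Hf. intros j Hj; lia.
  destruct (ispoly_der a Ha) as [a' [Ha' Hd]].
  pose proof Hf as Hf0. apply sm_S in Hf as [Hf1 Hf2].
  apply sm_S. split. eapply dpos_mul; eauto.
  eapply sm_local with (f := fun t => a' t * f t + a t * Dx f t).
  - intros x Hx. symmetry. apply Dx_eq. apply dl_mult. apply Hd. apply dl_Dx; auto.
  - apply sm_add; apply IHk; auto. eapply sm_mono; eauto.
Qed.

Lemma sm_const k c : sm k (fun _ => c).
Proof.
  revert c; induction k; intros c. intros j Hj; lia.
  apply sm_S. split. intros x _; eexists; apply dl_const.
  eapply sm_local with (f := fun _ => 0). intros x Hx; symmetry; apply Dx_eq, dl_const.
  apply IHk.
Qed.

Lemma sm_poly k a : ispoly a -> sm k a.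
Proof.
  intros Ha. eapply sm_local with (f := fun t => a t * 1).
  intros x _; ring. apply sm_mulp; auto. apply sm_const.
Qed.

Lemma sm_D k f : sm (S k) f -> sm k (Dx f).
Proof. intros H; apply sm_S in H; tauto. Qed.

Lemma sm_Dn a k f : sm (a + k) f -> sm k (Dn a f).
Proof.
  revert f; induction a; intros f H. exact H.
  rewrite Dn_S'. apply IHa. apply sm_D. exact H.
Qed.

Definition Mo (f : R -> R) : R -> R := fun t => Dx f t - f t.
Fixpoint Mn (k : nat) (f : R -> R) : R -> R := match k with O => f | S k' => Mo (Mn k' f) end.
Definition Sh (c d : R) (f : R -> R) : R -> R := fun t => L2 c f t - d * f t.
Definition Xk (k : nat) (f : R -> R) : R -> R := fun t => t ^ k * f t.
Definition X1 (f : R -> R) : R -> R := fun t => t * f t.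
Definition P (k : nat) (g : R) : op := compop (fun j f t => L2 g f t - INR j * f t) 1 k.

Lemma Mn_S' k f : Mn (S k) f = Mn k (Mo f).
Proof. induction k; simpl; auto. simpl in IHk. rewrite IHk. auto. Qed.

Lemma Mo_local f g : eqp f g -> eqp (Mo f) (Mo g).
Proof. intros E x Hx. unfold Mo. rewrite (Dx_local f g E x Hx), (E x Hx). auto. Qed.
Lemma Mn_local k f g : eqp f g -> eqp (Mn k f) (Mn k g).
Proof. induction k; simpl; intros E; auto. apply Mo_local; auto. Qed.
Lemma Sh_local c d f g : eqp f g -> eqp (Sh c d f) (Sh c d g).
Proof.
  intros E x Hx. unfold Sh, L2. rewrite (Dn_local 2 f g E x Hx), (Dx_local f g E x Hx), (E x Hx). auto.
Qed.
Lemma L2_local c f g : eqp f g -> eqp (L2 c f) (L2 c g).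
Proof.
  intros E x Hx. unfold L2. rewrite (Dn_local 2 f g E x Hx), (Dx_local f g E x Hx). auto.
Qed.
Lemma Xk_local k f g : eqp f g -> eqp (Xk k f) (Xk k g).
Proof. intros E x Hx. unfold Xk. rewrite (E x Hx). auto. Qed.
Lemma X1_local f g : eqp f g -> eqp (X1 f) (X1 g).
Proof. intros E x Hx. unfold X1. rewrite (E x Hx). auto. Qed.
Lemma P_local k c f g : eqp f g -> eqp (P k c f) (P k c g).
Proof.
  unfold P; induction k; simpl; intros E; auto.
  apply (Sh_local c (INR (1+k))). auto.
Qed.
Lemma Afac_local j f g : eqp f g -> eqp (Afac j f) (Afac j g).
Proof.
  intros E x Hx. unfold Afac. rewrite (L2_local _ f g E x Hx), (E x Hx). auto.
Qed.
Lemma eqp_trans f g h : eqp f g -> eqp g h -> eqp f h.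
Proof. intros A B x Hx. rewrite A, B; auto. Qed.
Lemma eqp_sym f g : eqp f g -> eqp g f.
Proof. intros A x Hx. rewrite A; auto. Qed.
Lemma eqp_refl f : eqp f f.
Proof. intros x _; auto. Qed.

Lemma sm_M k f : sm (S k) f -> sm k (Mo f).
Proof.
  intros H. eapply sm_local with (f := fun t => Dx f t + (fun _ => -1) t * f t).
  intros x _; unfold Mo; ring.
  apply sm_add. apply sm_D; auto. apply sm_mulp. apply ip_c. eapply sm_mono; eauto.
Qed.
Lemma sm_Mn b k f : sm (b + k) f -> sm k (Mn b f).
Proof. revert f; induction b; intros f H. exact H. rewrite Mn_S'. apply IHb. apply sm_M. exact H. Qed.
Lemma sm_Xk n k f : sm k f -> sm k (Xk n f).
Proof. intros H. apply sm_mulp; auto. apply ispoly_pow. Qed.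
Lemma sm_X1 k f : sm k f -> sm k (X1 f).
Proof. intros H. apply sm_mulp; auto. apply ip_id. Qed.
Lemma sm_Sh k c d f : sm (S (S k)) f -> sm k (Sh c d f).
Proof.
  intros H.
  eapply sm_local with (f := fun t => (fun t => t) t * Dx (Dx f) t +
     ((fun t => c + 1 + (fun _ => -1) t * (fun t => t) t) t * Dx f t + (fun _ => -d) t * f t)).
  intros x _; unfold Sh, L2; simpl; ring.
  apply sm_add. apply sm_mulp. apply ip_id. apply sm_D, sm_D; auto.
  apply sm_add. apply sm_mulp. apply ip_add. apply ip_c. apply ip_mul. apply ip_c. apply ip_id.
  apply sm_D; eapply sm_mono; eauto.
  apply sm_mulp. apply ip_c. eapply sm_mono; eauto.
Qed.
Lemma sm_P k c j f : sm (2 * k + j) f -> sm j (P k c f).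
Proof.
  revert j; induction k; intros j H. exact H.
  change (sm j (Sh c (INR (1+k)) (P k c f))). apply sm_Sh. apply IHk.
  eapply sm_mono; eauto. lia.
Qed.

Ltac smt H x Hx := first [ exact (H 0%nat ltac:(lia) x Hx) | exact (H 1%nat ltac:(lia) x Hx)
  | exact (H 2%nat ltac:(lia) x Hx) | exact (H 3%nat ltac:(lia) x Hx) | exact (H 4%nat ltac:(lia) x Hx) ].

Lemma DM f : sm 2 f -> eqp (Dx (Mo f)) (fun t => Dx (Dx f) t - Dx f t).
Proof.
  intros H x Hx. unfold Mo. apply Dx_eq. dl; smt H x Hx.
Qed.

Lemma A1 c d f : sm 3 f -> eqp (Dx (Sh c d f)) (Sh (c+1) (d+1) (Dx f)).
Proof.
  intros H x Hx. unfold Sh, L2. cbn [Dn]. erewrite Dx_eq.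
  2:{ dl; smt H x Hx. }
  cbv beta; ring.
Qed.

Lemma DDM f x : sm 3 f -> 0 < x -> Dx (Dx (Mo f)) x = Dx (Dx (Dx f)) x - Dx (Dx f) x.
Proof.
  intros H Hx. rewrite (Dx_local _ _ (DM f (sm_mono 3 2 f H ltac:(lia))) x Hx).
  apply Dx_eq. dl; smt H x Hx.
Qed.

Lemma A2 c d f : sm 3 f -> eqp (Mo (Sh c d f)) (Sh (c+1) d (Mo f)).
Proof.
  intros H x Hx. unfold Mo at 1. rewrite (A1 c d f H x Hx).
  unfold Sh, L2. cbn [Dn]. rewrite (DDM f x H Hx), (DM f (sm_mono 3 2 f H ltac:(lia)) x Hx).
  unfold Mo. ring.
Qed.

Lemma A3 f : sm 2 f -> eqp (Mo (Dx f)) (Dx (Mo f)).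
Proof. intros H x Hx. rewrite (DM f H x Hx). unfold Mo. ring. Qed.

Lemma DX1 f : dpos f -> eqp (Dx (X1 f)) (fun t => f t + t * Dx f t).
Proof. intros H x Hx. unfold X1. apply Dx_eq. erewrite <- (Rmult_1_l (f x)). dl; auto. Qed.
Lemma dl_eq f x l l' : derivable_pt_lim f x l -> l = l' -> derivable_pt_lim f x l'.
Proof. intros H ->; auto. Qed.

Ltac dcomp H x Hx := apply Dx_eq; eapply dl_eq; [dl; try smt H x Hx | cbv beta ].

Lemma A5 c d f : sm 2 f -> eqp (Sh c d (X1 f)) (fun t => t * Sh (c+2) (d+1) f t + (c+1) * f t).
Proof.
  intros H x Hx. unfold Sh, L2. cbn [Dn].
  assert (E1 : eqp (Dx (X1 f)) (fun t => f t + t * Dx f t)) by (apply DX1; apply (H 0%nat); lia).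
  rewrite (Dx_local _ _ E1 x Hx), (E1 x Hx).
  assert (E2 : Dx (fun t => f t + t * Dx f t) x = Dx f x + (Dx f x + x * Dx (Dx f) x)).
  { dcomp H x Hx. ring. }
  rewrite E2. unfold X1. ring.
Qed.

Lemma A6 g : sm 2 g -> eqp (Sh 1 1 g) (Dx (Mo (X1 g))).
Proof.
  intros H x Hx.
  assert (E1 : eqp (Mo (X1 g)) (fun t => g t + t * Dx g t - t * g t)).
  { intros z Hz. unfold Mo. rewrite (DX1 g (H 0%nat ltac:(lia)) z Hz). unfold X1. ring. }
  rewrite (Dx_local _ _ E1 x Hx). symmetry. dcomp H x Hx. unfold Sh, L2. cbn [Dn]. ring.
Qed.

Lemma A7 f : sm 2 f -> eqp (L2 (-1) f) (X1 (Dx (Mo f))).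
Proof.
  intros H x Hx. unfold X1. rewrite (DM f H x Hx). unfold L2. cbn [Dn]. ring.
Qed.

Lemma DXk k u : dpos u -> eqp (Dx (Xk k u)) (fun t => INR k * t ^ Init.Nat.pred k * u t + t ^ k * Dx u t).
Proof.
  intros H x Hx. unfold Xk. apply Dx_eq. eapply dl_eq; [dl; apply H; auto | cbv beta; ring].
Qed.

Lemma A4a k u : sm 2 u -> eqp (Sh (- INR k) 1 (Xk k u)) (Xk k (Sh (INR k) (1 + INR k) u)).
Proof.
  intros H x Hx. unfold Sh, L2. cbn [Dn].
  pose proof (DXk k u (H 0%nat ltac:(lia))) as E1.
  rewrite (Dx_local _ _ E1 x Hx), (E1 x Hx).
  assert (E2 : Dx (fun t => INR k * t ^ Init.Nat.pred k * u t + t ^ k * Dx u t) x =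
     INR k * (INR (Init.Nat.pred k) * x ^ Init.Nat.pred (Init.Nat.pred k)) * u x
     + INR k * x ^ Init.Nat.pred k * Dx u x
     + (INR k * x ^ Init.Nat.pred k * Dx u x + x ^ k * Dx (Dx u) x)).
  { dcomp H x Hx. ring. }
  rewrite E2. unfold Xk.
  destruct k as [|[|k]]; simpl Init.Nat.pred; simpl INR; simpl pow.
  - ring.
  - ring.
  - try rewrite !S_INR. ring.
Qed.

Lemma A4b k u : sm 2 u -> eqp (Dx (Xk (S k) (Mo u))) (Xk k (Sh (INR k) (INR k + 1) u)).
Proof.
  intros H x Hx. unfold Xk.
  erewrite Dx_eq.
  2:{ eapply dl_eq. apply dl_mult. apply dl_pow. apply dl_Dx. apply sm_M in H. apply (H 0%nat); auto. reflexivity. }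
  rewrite (DM u H x Hx). unfold Mo, Sh, L2. cbn [Dn]. simpl Init.Nat.pred. rewrite S_INR. simpl pow. ring.
Qed.

Lemma A4 k u : sm 2 u -> eqp (Sh (- INR k) 1 (Xk k u)) (Dx (Xk (S k) (Mo u))).
Proof.
  intros H. eapply eqp_trans. apply A4a; auto. apply eqp_sym. eapply eqp_trans. apply A4b; auto.
  apply Xk_local. intros x _. f_equal. ring.
Qed.

Lemma C5 j f : sm 2 f -> eqp (Afac j (X1 f)) (X1 (Sh (2 * INR j + 1) (INR j + 1) f)).
Proof.
  intros H x Hx. unfold Afac.
  pose proof (A5 (2 * INR j - 1) (INR j) f H x Hx) as E. unfold Sh in E.
  replace (L2 (2 * INR j - 1) (X1 f) x) with (INR j * X1 f x + (x * (L2 (2 * INR j - 1 + 2) f x - (INR j + 1) * f x) + (2 * INR j - 1 + 1) * f x)) by lra.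
  unfold X1, Sh. replace (2 * INR j - 1 + 2) with (2 * INR j + 1) by ring. field. lra.
Qed.

Lemma L2_scal c K q : sm 2 q -> eqp (L2 c (fun t => K * q t)) (fun t => K * L2 c q t).
Proof.
  intros H x Hx. unfold L2. cbn [Dn].
  assert (E1 : eqp (Dx (fun t => K * q t)) (fun t => K * Dx q t)).
  { intros z Hz. dcomp H z Hz. ring. }
  rewrite (Dx_local _ _ E1 x Hx), (E1 x Hx).
  assert (E2 : Dx (fun t => K * Dx q t) x = K * Dx (Dx q) x) by (dcomp H x Hx; ring).
  rewrite E2. ring.
Qed.

Lemma Sh_eqr c c' d d' f : c = c' -> d = d' -> Sh c d f = Sh c' d' f.
Proof. intros -> ->; auto. Qed.

Lemma iterA1 a : forall c d h, sm (a + 2) h ->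
  eqp (Dn a (Sh c d h)) (Sh (c + INR a) (d + INR a) (Dn a h)).
Proof.
  induction a; intros c d h H.
  - simpl. rewrite (Sh_eqr (c+0) c (d+0) d); [apply eqp_refl| ring | ring].
  - simpl Dn. eapply eqp_trans. apply Dx_local. apply IHa. eapply sm_mono; eauto; lia.
    eapply eqp_trans. apply A1. apply sm_Dn. replace (a + 3)%nat with (S a + 2)%nat by lia. auto.
    rewrite (Sh_eqr (c + INR a + 1) (c + INR (S a)) (d + INR a + 1) (d + INR (S a))).
    apply eqp_refl. rewrite S_INR; ring. rewrite S_INR; ring.
Qed.

Lemma iterA2 b : forall c d h, sm (b + 2) h ->
  eqp (Mn b (Sh c d h)) (Sh (c + INR b) d (Mn b h)).
Proof.
  induction b; intros c d h H.
  - simpl. rewrite (Sh_eqr (c+0) c d d); [apply eqp_refl| ring | ring].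
  - simpl Mn. eapply eqp_trans. apply Mo_local. apply IHb. eapply sm_mono; eauto; lia.
    eapply eqp_trans. apply A2. apply sm_Mn. replace (b + 3)%nat with (S b + 2)%nat by lia. auto.
    rewrite (Sh_eqr (c + INR b + 1) (c + INR (S b)) d d).
    apply eqp_refl. rewrite S_INR; ring. ring.
Qed.

Lemma iterA3a b : forall z, sm (b + 1) z -> eqp (Mn b (Dx z)) (Dx (Mn b z)).
Proof.
  induction b; intros z H.
  - apply eqp_refl.
  - simpl Mn. eapply eqp_trans. apply Mo_local. apply IHb. eapply sm_mono; eauto; lia.
    apply A3. apply sm_Mn. replace (b + 2)%nat with (S b + 1)%nat by lia. auto.
Qed.

Lemma iterA3b a : forall z, sm (a + 1) z -> eqp (Mo (Dn a z)) (Dn a (Mo z)).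
Proof.
  induction a; intros z H.
  - apply eqp_refl.
  - simpl Dn. eapply eqp_trans. apply A3. apply sm_Dn. replace (a + 2)%nat with (S a + 1)%nat by lia. auto.
    apply Dx_local. apply IHa. eapply sm_mono; eauto; lia.
Qed.

Lemma iterA12 a b c d h : sm (a + b + 2) h ->
  eqp (Dn a (Mn b (Sh c d h))) (Sh (c + INR b + INR a) (d + INR a) (Dn a (Mn b h))).
Proof.
  intros H. eapply eqp_trans. apply Dn_local. apply iterA2. eapply sm_mono; eauto; lia.
  apply iterA1. apply sm_Mn. replace (b + (a + 2))%nat with (a + b + 2)%nat by lia. auto.
Qed.

Lemma dl_expo x : derivable_pt_lim (fun t => exp (- t)) x (- exp (- x)).
Proof.
  pose proof (derivable_pt_lim_comp Ropp exp x (-1) (exp (- x))) as H.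
  eapply dl_eq. apply H. replace (-1) with (- 1) by ring. apply derivable_pt_lim_opp, derivable_pt_lim_id.
  apply derivable_pt_lim_exp. ring.
Qed.

Lemma surjM N y : sm (S N) y -> exists g, sm (S (S N)) g /\ eqp (Mo g) y.
Proof.
  intros Hy.
  assert (Hd : dpos y) by (apply (Hy 0%nat); lia).
  set (h := fun t => exp (- t) * y t).
  assert (Hc : forall t, 0 < t -> continuous h t).
  { intros t Ht. apply continuity_pt_filterlim. destruct (Hd t Ht) as [l Hl].
    apply derivable_continuous_pt. exists (- exp (- t) * y t + exp (- t) * l).
    unfold h. apply (dl_mult (fun t => exp (- t)) y). apply dl_expo. auto. }
  set (I := fun b => RInt h 1 b).
  assert (HI : forall x, 0 < x -> derivable_pt_lim I x (h x)).
  { intros x Hx. apply is_derive_Reals. apply (is_derive_RInt h I 1 x).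
    - assert (Hp : 0 < x / 2) by lra. exists (mkposreal _ Hp). intros b Hb.
      assert (Hb' : Rabs (b - x) < x / 2) by exact Hb.
      apply Rabs_def2 in Hb'.
      unfold I. apply (RInt_correct (V:=R_CompleteNormedModule)). apply ex_RInt_continuous. intros z Hz. apply Hc.
      destruct Hz as [Hz _]. eapply Rlt_le_trans; [|exact Hz].
      apply Rmin_glb_lt; lra.
    - apply Hc; auto. }
  set (g := fun t => exp t * I t).
  assert (Hg : forall x, 0 < x -> derivable_pt_lim g x (g x + y x)).
  { intros x Hx. eapply dl_eq. apply (dl_mult exp I). apply derivable_pt_lim_exp. apply HI; auto.
    unfold g, h. rewrite <- Rmult_assoc, <- exp_plus. replace (x + - x) with 0 by ring.
    rewrite exp_0. ring. }
  exists g. split.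
  - assert (Hdg : eqp (fun t => g t + y t) (Dx g)). { intros x Hx. symmetry. apply Dx_eq; auto. }
    assert (forall k, (k <= S (S N))%nat -> sm k g).
    { induction k; intros Hk. intros j Hj; lia.
      apply sm_S. split. intros x Hx; eexists; apply Hg; auto.
      eapply sm_local. exact Hdg. apply sm_add. apply IHk; lia. eapply sm_mono; eauto. lia. }
    auto.
  - intros x Hx. unfold Mo. rewrite (Dx_eq _ _ _ (Hg x Hx)). ring.
Qed.

Lemma Kform k : forall y, sm (2 * k) y -> eqp (P k 0 y) (Dn k (Xk k (Mn k y))).
Proof.
  induction k; intros y H.
  - intros x _. unfold P, Xk. simpl. ring.
  - change (eqp (Sh 0 (INR (S k)) (P k 0 y)) (Dn (S k) (Xk (S k) (Mn (S k) y)))).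
    eapply eqp_trans. apply Sh_local. apply IHk. eapply sm_mono; eauto; lia.
    set (W := Xk k (Mn k y)).
    assert (HW : sm (k + 2) W). { apply sm_Xk. apply sm_Mn. eapply sm_mono; eauto; lia. }
    pose proof (iterA1 k (- INR k) 1 W HW) as E.
    rewrite (Sh_eqr (- INR k + INR k) 0 (1 + INR k) (INR (S k))) in E by (rewrite ?S_INR; ring).
    eapply eqp_trans. apply eqp_sym. exact E.
    rewrite Dn_S'. apply Dn_local. apply A4. apply sm_Mn. eapply sm_mono; eauto; lia.
Qed.

Lemma Shift k : forall c y, sm (2 * k + 1) y -> eqp (Mo (P k c y)) (P k (c + 1) (Mo y)).
Proof.
  induction k; intros c y H.
  - apply eqp_refl.
  - change (eqp (Mo (Sh c (INR (S k)) (P k c y))) (Sh (c+1) (INR (S k)) (P k (c+1) (Mo y)))).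
    eapply eqp_trans. apply A2. apply sm_P. eapply sm_mono; eauto; lia.
    apply Sh_local. apply IHk. eapply sm_mono; eauto; lia.
Qed.

Lemma Mainf k : forall g, (g <= k)%nat -> forall y, sm (2 * k + 1) y ->
  eqp (P k (INR g) y) (Dn k (Mn g (Xk k (Mn (k - g) y)))).
Proof.
  induction g; intros Hg y H.
  - rewrite Nat.sub_0_r. simpl INR. simpl Mn. apply Kform. eapply sm_mono; eauto; lia.
  - destruct (surjM (2 * k) y) as [h [Hh Eh]]. replace (S (2 * k)) with (2 * k + 1)%nat by lia. auto.
    assert (Hh' : sm (2 * k + 1) h) by (eapply sm_mono; eauto; lia).
    eapply eqp_trans. apply P_local. apply eqp_sym. exact Eh.
    rewrite S_INR. eapply eqp_trans. apply eqp_sym. apply Shift. auto.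
    eapply eqp_trans. apply Mo_local. apply IHg. lia. auto.
    eapply eqp_trans. apply iterA3b.
    { apply sm_Mn. apply sm_Xk. apply sm_Mn. eapply sm_mono; eauto; lia. }
    apply Dn_local. change (Mo (Mn g ?Z)) with (Mn (S g) Z). apply Mn_local. apply Xk_local.
    replace (k - g)%nat with (S (k - S g)) by lia. rewrite Mn_S'. apply Mn_local. auto.
Qed.

Lemma Tform k y : sm (2 * k + 1) y -> eqp (P k (INR k) y) (Dn k (Mn k (Xk k y))).
Proof.
  intros H. eapply eqp_trans. apply Mainf; auto. rewrite Nat.sub_diag. apply eqp_refl.
Qed.

Lemma RHS_form alpha y : sm (2 * alpha + 4) y ->
  eqp (RHSop alpha y) (X1 (Dn (S (alpha + 1)) (Mn (S (alpha+1)) (Xk (alpha+1) y)))).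
Proof.
  intros H. set (m := (alpha + 1)%nat).
  assert (Hm : sm (2 * m + 2) y) by (eapply sm_mono; eauto; unfold m; lia).
  unfold RHSop. change (compop (Bfac alpha) 1 (alpha + 1)) with (P m (INR alpha + 1)).
  replace (INR alpha + 1) with (INR m) by (unfold m; rewrite plus_INR; simpl; ring).
  eapply eqp_trans. apply A7. apply sm_P. eapply sm_mono; eauto; lia.
  apply X1_local. apply Dx_local.
  eapply eqp_trans. apply Mo_local. apply Tform. eapply sm_mono; eauto; lia.
  apply iterA3b. apply sm_Mn. apply sm_Xk. eapply sm_mono; eauto; lia.
Qed.

Lemma flem j h : sm (2 * j + 2) h ->
  eqp (Sh (2 * INR j + 1) (INR j + 1) (Dn j (Mn j h))) (Dn (S j) (Mn (S j) (X1 h))).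
Proof.
  intros H. pose proof (iterA12 j j 1 1 h ltac:(eapply sm_mono; eauto; lia)) as E.
  rewrite (Sh_eqr (1 + INR j + INR j) (2 * INR j + 1) (1 + INR j) (INR j + 1)) in E by ring.
  eapply eqp_trans. apply eqp_sym. exact E.
  eapply eqp_trans. apply Dn_local, Mn_local, A6. eapply sm_mono; eauto; lia.
  eapply eqp_trans. apply Dn_local, iterA3a. apply sm_M. apply sm_X1. eapply sm_mono; eauto; lia.
  rewrite Dn_S', Mn_S'. apply eqp_refl.
Qed.

Lemma L1 m : forall y, sm (2 * m + 2) y ->
  eqp (compop Afac 0 (S m) y) (X1 (Dn (S m) (Mn (S m) (Xk m y)))).
Proof.
  induction m; intros y H.
  - change (eqp (Afac 0 y) (X1 (Dx (Mo (Xk 0 y))))).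
    intros x Hx. rewrite (X1_local _ _ (Dx_local _ _ (Mo_local (Xk 0 y) y (fun z _ => ltac:(unfold Xk; simpl; ring)))) x Hx).
    rewrite <- (A7 y (sm_mono 2 2 y H ltac:(lia)) x Hx).
    unfold Afac. simpl INR. replace (2 * 0 - 1) with (-1) by ring. field. lra.
  - change (eqp (Afac (S m) (compop Afac 0 (S m) y)) (X1 (Dn (S (S m)) (Mn (S (S m)) (Xk (S m) y))))).
    eapply eqp_trans. apply Afac_local. apply IHm. eapply sm_mono; eauto; lia.
    eapply eqp_trans. apply C5. apply sm_Dn. apply sm_Mn. apply sm_Xk. eapply sm_mono; eauto; lia.
    apply X1_local. eapply eqp_trans. apply flem. apply sm_Xk. eapply sm_mono; eauto; lia.
    apply Dn_local, Mn_local. intros x _. unfold X1, Xk. simpl. ring.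
Qed.

Fixpoint prodc (lam : R) (k : nat) : R :=
  match k with O => 1 | S k' => prodc lam k' * (lam - INR (S k')) end.

Lemma eigen k c lam q : sm 2 q -> eqp (L2 c q) (fun t => lam * q t) ->
  eqp (P k c q) (fun t => prodc lam k * q t).
Proof.
  intros Hq E. induction k.
  - intros x _. unfold P. simpl. ring.
  - change (eqp (Sh c (INR (S k)) (P k c q)) (fun t => prodc lam (S k) * q t)).
    eapply eqp_trans. apply Sh_local. exact IHk.
    intros x Hx. unfold Sh. rewrite (L2_scal c _ q Hq x Hx), (E x Hx). cbn [prodc]. ring.
Qed.

Lemma prodc_poch n k : prodc (1 - INR n) k = (-1) ^ k * poch (INR n) k.
Proof.
  induction k. simpl. ring. cbn [prodc poch pow]. rewrite IHk. rewrite S_INR. ring.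
Qed.

Lemma dsum (a : nat -> R) (e : nat -> nat) N x :
  derivable_pt_lim (fun t => sum_f_R0 (fun k => a k * t ^ e k) N) x
    (sum_f_R0 (fun k => a k * (INR (e k) * x ^ Init.Nat.pred (e k))) N).
Proof.
  induction N.
  - simpl. eapply dl_eq. apply dl_mult. apply dl_const. apply dl_pow. cbv beta; ring.
  - simpl. apply dl_plus. exact IHN. eapply dl_eq. apply dl_mult. apply dl_const. apply dl_pow. cbv beta; ring.
Qed.

Lemma ispoly_sum (a : nat -> R) (e : nat -> nat) N :
  ispoly (fun t => sum_f_R0 (fun k => a k * t ^ e k) N).
Proof.
  induction N.
  - simpl. apply ip_mul. apply ip_c. apply ispoly_pow.
  - simpl. apply ip_add. exact IHN. apply ip_mul. apply ip_c. apply ispoly_pow.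
Qed.

Lemma sum_lin3 (f g h : nat -> R) u v w N :
  sum_f_R0 (fun k => u * f k + v * g k + w * h k) N =
  u * sum_f_R0 f N + v * sum_f_R0 g N + w * sum_f_R0 h N.
Proof. induction N; simpl. ring. rewrite IHN. ring. Qed.

Lemma tele (t d : nat -> R) N : t 0%nat = d 0%nat ->
  (forall k, (k < N)%nat -> t (S k) = d (S k) - d k) -> sum_f_R0 t N = d N.
Proof.
  intros H0 HS. induction N. simpl; auto.
  simpl. rewrite IHN. rewrite HS; [ring|lia]. intros; apply HS; lia.
Qed.

Lemma ode (c : nat -> R) N gam K0 :
  (forall k, (k < N)%nat -> c (S k) * INR (S k) * (INR (S k) + gam) = c k * (INR k - INR N)) ->
  eqp (L2 gam (fun t => K0 * sum_f_R0 (fun k => c k * t ^ k) N))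
      (fun t => - INR N * (K0 * sum_f_R0 (fun k => c k * t ^ k) N)).
Proof.
  intros Hr x Hx. unfold L2. cbn [Dn].
  set (p := fun t => K0 * sum_f_R0 (fun k => c k * t ^ k) N).
  assert (E1 : forall z, Dx p z = K0 * sum_f_R0 (fun k => (c k * INR k) * z ^ Init.Nat.pred k) N).
  { intros z. apply Dx_eq. unfold p. eapply dl_eq. apply dl_mult. apply dl_const.
    apply (dsum c (fun k => k)). rewrite Rmult_0_l, Rplus_0_l. f_equal. apply sum_eq. intros; ring. }
  assert (E2 : Dx (Dx p) x = K0 * sum_f_R0 (fun k => (c k * INR k) * (INR (Init.Nat.pred k) * x ^ Init.Nat.pred (Init.Nat.pred k))) N).
  { rewrite (Dx_local (Dx p) _ (fun z _ => E1 z) x Hx). apply Dx_eq. eapply dl_eq. apply dl_mult. apply dl_const.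
    apply (dsum (fun k => c k * INR k) Init.Nat.pred). cbv beta; ring. }
  rewrite E2, E1. unfold p.
  set (d := fun k => (INR N - INR k) * c k * x ^ k).
  assert (Hs : sum_f_R0 (fun k => x * ((c k * INR k) * (INR (Init.Nat.pred k) * x ^ Init.Nat.pred (Init.Nat.pred k))) +
      (gam + 1 - x) * ((c k * INR k) * x ^ Init.Nat.pred k) + INR N * (c k * x ^ k)) N = d N).
  { apply tele.
    - unfold d. simpl. ring.
    - intros k Hk. pose proof (Hr k Hk) as Hrk. unfold d. simpl Init.Nat.pred.
      assert (Hp : INR k * (x * x ^ Init.Nat.pred k) = INR k * x ^ k).
      { destruct k. simpl. ring. simpl. ring. }
      rewrite S_INR in *. simpl pow.
      assert (Z : x * (c (S k) * (INR k + 1) * (INR k * x ^ Init.Nat.pred k)) +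
        (gam + 1 - x) * (c (S k) * (INR k + 1) * x ^ k) + INR N * (c (S k) * (x * x ^ k)) -
        ((INR N - (INR k + 1)) * c (S k) * (x * x ^ k) - (INR N - INR k) * c k * x ^ k)
        = x ^ k * (c (S k) * (INR k + 1) * (INR k + 1 + gam) - c k * (INR k - INR N))).
      { replace (x * (c (S k) * (INR k + 1) * (INR k * x ^ Init.Nat.pred k))) with
          (c (S k) * (INR k + 1) * (INR k * (x * x ^ Init.Nat.pred k))) by ring.
        rewrite Hp. ring. }
      rewrite Hrk in Z. lra. }
  rewrite sum_lin3 in Hs.
  assert (HdN : d N = 0) by (unfold d; ring).
  rewrite HdN in Hs.
  transitivity (K0 * (x * sum_f_R0 (fun k => c k * INR k * (INR (Init.Nat.pred k) * x ^ Init.Nat.pred (Init.Nat.pred k))) N +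
     (gam + 1 - x) * sum_f_R0 (fun k => c k * INR k * x ^ Init.Nat.pred k) N)). ring.
  replace (x * sum_f_R0 (fun k => c k * INR k * (INR (Init.Nat.pred k) * x ^ Init.Nat.pred (Init.Nat.pred k))) N +
     (gam + 1 - x) * sum_f_R0 (fun k => c k * INR k * x ^ Init.Nat.pred k) N) with
     (- INR N * sum_f_R0 (fun k => c k * x ^ k) N) by lra. ring.
Qed.

Lemma poch_pos b k : 0 < b -> 0 < poch b k.
Proof.
  intros Hb. induction k; simpl. lra. apply Rmult_lt_0_compat; auto. pose proof (pos_INR k). lra.
Qed.

Definition cl (N : nat) (b : R) (k : nat) : R := poch (- INR N) k / poch b k / INR (Factorial.fact k).

Lemma lag_form N g t : laguerre N g t =
  (poch (g + 1) N / INR (Factorial.fact N)) * sum_f_R0 (fun k => cl N (g + 1) k * t ^ k) N.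
Proof. unfold laguerre, F11_term. f_equal. apply sum_eq. intros. unfold cl, Rdiv. ring. Qed.

Lemma cl_rec N g k : 0 < g + 1 ->
  cl N (g + 1) (S k) * INR (S k) * (INR (S k) + g) = cl N (g + 1) k * (INR k - INR N).
Proof.
  intros Hg. unfold cl. cbn [poch]. rewrite fact_simpl, mult_INR, S_INR.
  pose proof (poch_pos (g+1) k Hg). pose proof (INR_fact_neq_0 k). pose proof (pos_INR k).
  field. repeat split; try lra.
Qed.

Theorem corollary3p3 (alpha : nat) :
  (forall (y : R -> R), Ck_pos (2 * alpha + 4) y ->
     forall x, 0 < x ->
       (-1) ^ (alpha + 1) * LHSop alpha y x = (-1) ^ (alpha + 1) * RHSop alpha y x)
  /\
  (forall n : nat, (1 <= n)%nat ->
     forall x, 0 < x ->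
       calL alpha (Tpoly n alpha) x + poch (INR n) (alpha + 2) * Tpoly n alpha x = 0).
Proof.
  split.
  - intros y [Hy _] x Hx. f_equal.
    assert (Hs : sm (2 * alpha + 4) y) by exact Hy.
    unfold LHSop. replace (alpha + 2)%nat with (S (alpha + 1)) by lia.
    rewrite (L1 (alpha + 1) y ltac:(eapply sm_mono; eauto; lia) x Hx).
    rewrite (RHS_form alpha y Hs x Hx). reflexivity.
  - intros n Hn x Hx.
    set (g := INR alpha + 2).
    set (K1 := - tcoef n alpha).
    set (q := fun t => K1 * laguerre (n - 1) g t).
    set (K0 := K1 * (poch (g + 1) (n - 1) / INR (Factorial.fact (n - 1)))).
    set (c := cl (n - 1) (g + 1)).
    assert (Eq : forall t, q t = K0 * sum_f_R0 (fun k => c k * t ^ k) (n - 1)).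
    { intros t. unfold q, K0, c. rewrite lag_form. ring. }
    assert (Pq : ispoly q).
    { eapply ip_ext. 2: intros t; symmetry; apply Eq. apply ip_mul. apply ip_c.
      apply (ispoly_sum c (fun k => k)). }
    assert (Hode : eqp (L2 g q) (fun t => (1 - INR n) * q t)).
    { eapply eqp_trans. apply L2_local. intros t _. apply Eq.
      eapply eqp_trans. apply ode. intros k Hk. unfold c.
      replace (INR (S k) + g) with (INR (S k) + g) by ring. apply cl_rec. unfold g.
      pose proof (pos_INR alpha). lra.
      intros t _. rewrite Eq. rewrite minus_INR by lia. simpl INR. ring. }
    assert (ET : eqp (Tpoly n alpha) (fun t => t * q t)).
    { intros t _. unfold Tpoly, q, K1, g. ring. }
    assert (HT : forall k, sm k (Tpoly n alpha)).
    { intros k. eapply sm_local. apply eqp_sym. exact ET. apply sm_poly. apply ip_mul. apply ip_id. auto. }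
    unfold calL. rewrite (RHS_form alpha _ (HT _) x Hx).
    unfold X1.
    assert (E2 : eqp (Dn (S (alpha + 1)) (Mn (S (alpha + 1)) (Xk (alpha + 1) (Tpoly n alpha))))
                     (fun t => prodc (1 - INR n) (S (alpha + 1)) * q t)).
    { eapply eqp_trans. apply Dn_local, Mn_local. instantiate (1 := Xk (S (alpha + 1)) q).
      intros t Ht. unfold Xk. rewrite (ET t Ht). simpl. ring.
      eapply eqp_trans. apply eqp_sym. apply Tform. apply sm_poly; auto.
      apply eigen. apply sm_poly; auto.
      replace (INR (S (alpha + 1))) with g. exact Hode.
      unfold g. rewrite S_INR, plus_INR. simpl. ring. }
    rewrite (E2 x Hx), (ET x Hx). cbv beta.
    rewrite prodc_poch. replace (alpha + 2)%nat with (S (alpha + 1)) by lia.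
    cbn [pow]. 
    assert (Hsq : (-1) ^ (alpha + 1) * (-1) ^ (alpha + 1) = 1).
    { rewrite <- Rpow_mult_distr. replace (-1 * -1) with 1 by ring. apply pow1. }
    transitivity (((-1) ^ (alpha + 1) * (-1) ^ (alpha + 1)) * (- (x * poch (INR n) (S (alpha + 1)) * q x))
      + poch (INR n) (S (alpha + 1)) * (x * q x)). ring.
    rewrite Hsq. ring.
Qed.
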